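(* Consider the system $x(t+1)=Ax(t)+Bu_S(t)$, $y_S(t)=Cx(t)+Du_S(t)$ with $x(t)\in\mathbb{R}^n$, $u_S(t)\in\mathbb{R}^m$, $y_S(t)\in\mathbb{R}^p$, under the attack model $u_S(t)=w(t)$, $y(t)=y_S(t)+a(t)$ (controller-designed input equal to zero), where at most $r$ inputs and at most $s$ outputs are attacked. Suppose $(A,B,C,D)$ is $(2r,2s)$-sparse strongly observable. Let $t\ge n-1$ and let $\Gamma_u\subseteq\{1,\dots,m\}$, $\Gamma_y\subseteq\{1,\dots,p\}$ with $|\Gamma_u|\le r$ and $|\Gamma_y|\ge p-s$. If there exist $\hat{\mathbf{U}}\in\mathbb{R}^{n|\Gamma_u|}$ and $\hat x\in\mathbb{R}^n$ such that $$\mathbf{Y}|_{\Gamma_y}(t)=\mathcal{O}_{\Gamma_y}\hat x+\mathcal{N}_{\Gamma_u\to\Gamma_y}\hat{\mathbf{U}},$$ then $\hat x=x(t-n+1)$.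
   Context: The adversarial signals $w(t)\in\mathbb{R}^m$, $a(t)\in\mathbb{R}^p$ are arbitrary except that there exist fixed unknown sets $\Gamma_u^*\subseteq\{1,\dots,m\}$, $|\Gamma_u^*|\le r$, and $\Lambda^*\subseteq\{1,\dots,p\}$, $|\Lambda^*|\le s$, with $w(t)$ supported in $\Gamma_u^*$ and $a(t)$ supported in $\Lambda^*$ for all $t$. (Standing assumption of the paper's observer design: the known controller-designed input is taken to be zero, its effect having been subtracted from the outputs.) Notation: for $\Theta\subseteq\{1,\dots,p\}$, $\mathbf{Y}|_{\Theta}(t)$ is the stacked vector $[\,y(t-n+1)|_\Theta^T\ \cdots\ y(t)|_\Theta^T\,]^T$, where $y(k)|_\Theta$ keeps only the entries of $y(k)$ indexed by $\Theta$. $\mathcal{O}_{\Theta}=\begin{bmatrix}C_\Theta^T & A^TC_\Theta^T & \cdots & (A^T)^{n-1}C_\Theta^T\end{bmatrix}^T$ with $C_\Theta=C|_{(\Theta,\cdot)}$ (rows of $C$ indexed by $\Theta$). For $\Gamma\subseteq\{1,\dots,m\}$, $\mathcal{N}_{\Gamma\to\Theta}$ is the block lower-triangular Toeplitz matrix with $n$ block rows and $n$ block columns whose diagonal blocks are $D_{\Theta\Gamma}=D|_{(\Theta,\Gamma)}$ and whose $(i,j)$ block for $i>j$ is $C_\Theta A^{i-j-1}B_\Gamma$, with $B_\Gamma=B|_{(\cdot,\Gamma)}$ (columns of $B$ indexed by $\Gamma$). Subsystem $(A,B|_{(\cdot,\Gamma)},C|_{(\Theta,\cdot)},D|_{(\Theta,\Gamma)})$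 keeps the inputs in $\Gamma$ and outputs in $\Theta$. A system is strongly observable if for any initial state and any input sequence there exists $\tau$ such that the initial state is uniquely determined by $y(0),\dots,y(\tau)$ (any initial state producing the same outputs under some input sequence is equal to it). The system is $(r',s')$-sparse strongly observable if every subsystem with input set $\Gamma$, $|\Gamma|\le r'$, and output set $\Theta$, $|\Theta|\ge p-s'$, is strongly observable. *)

(* Defs.v *)
From HB Require Import structures.
From mathcomp Require Import all_boot all_order all_algebra.
From mathcomp Require Import reals.
Set Implicit Arguments. Unset Strict Implicit. Unset Printing Implicit Defensive.
Import Order.TTheory GRing.Theory Num.Theory.
Local Open Scope ring_scope.

Section Defs.
Variable R : realType.

Definition rows_of {p k : nat} (Th : {set 'I_p}) (M : 'M[R]_(p, k)) : 'M[R]_(#|Th|, k) :=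
  \matrix_(i < #|Th|, j < k) M (enum_val i) j.

Definition cols_of {k m : nat} (G : {set 'I_m}) (M : 'M[R]_(k, m)) : 'M[R]_(k, #|G|) :=
  \matrix_(i < k, j < #|G|) M i (enum_val j).

Fixpoint traj {n m : nat} (A : 'M[R]_n) (B : 'M[R]_(n, m)) (x0 : 'cV[R]_n)
    (u : nat -> 'cV[R]_m) (k : nat) : 'cV[R]_n :=
  match k with
  | 0 => x0
  | k'.+1 => A *m traj A B x0 u k' + B *m u k'
  end.

Definition outp {n m p : nat} (A : 'M[R]_n) (B : 'M[R]_(n, m)) (C : 'M[R]_(p, n))
    (D : 'M[R]_(p, m)) (x0 : 'cV[R]_n) (u : nat -> 'cV[R]_m) (k : nat) : 'cV[R]_p :=
  C *m traj A B x0 u k + D *m u k.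

Definition strongly_observable {n m p : nat} (A : 'M[R]_n) (B : 'M[R]_(n, m))
    (C : 'M[R]_(p, n)) (D : 'M[R]_(p, m)) : Prop :=
  forall (x0 : 'cV[R]_n) (u : nat -> 'cV[R]_m), exists tau : nat,
    forall (x0' : 'cV[R]_n) (u' : nat -> 'cV[R]_m),
      (forall k, (k <= tau)%N -> outp A B C D x0' u' k = outp A B C D x0 u k) ->
      x0' = x0.

Definition sparse_strongly_observable {n m p : nat} (A : 'M[R]_n) (B : 'M[R]_(n, m))
    (C : 'M[R]_(p, n)) (D : 'M[R]_(p, m)) (r' s' : nat) : Prop :=
  forall (G : {set 'I_m}) (Th : {set 'I_p}),
    (#|G| <= r')%N -> (p - s' <= #|Th|)%N ->
    strongly_observable A (cols_of G B) (rows_of Th C) (cols_of G (rows_of Th D)).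

(* k-th block (k < n) of O_Theta : C_Theta A^k *)
Definition obs_block {n p : nat} (A : 'M[R]_n) (C : 'M[R]_(p, n)) (Th : {set 'I_p})
    (k : nat) : 'M[R]_(#|Th|, n) :=
  rows_of Th C *m A ^+ k.

(* (i,j) block of the block lower-triangular Toeplitz matrix N_{Gamma -> Theta} *)
Definition toep_block {n m p : nat} (A : 'M[R]_n) (B : 'M[R]_(n, m)) (C : 'M[R]_(p, n))
    (D : 'M[R]_(p, m)) (G : {set 'I_m}) (Th : {set 'I_p}) (i j : nat)
    : 'M[R]_(#|Th|, #|G|) :=
  if i == j then cols_of G (rows_of Th D)
  else if (j < i)%N then rows_of Th C *m A ^+ (i - j - 1) *m cols_of G B
  else 0.

(* k-th block of the stacked vector Y|_Theta(t) = y(t+1-n+k)|_Theta *)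
Definition Yblock {p : nat} (n : nat) (y : nat -> 'cV[R]_p) (Th : {set 'I_p})
    (t k : nat) : 'cV[R]_#|Th| :=
  rows_of Th (y (t + 1 - n + k)%N).

End Defs.

(* Main.v *)
Require Import Defs.
From HB Require Import structures.
From mathcomp Require Import all_boot all_order all_algebra.
From mathcomp Require Import reals zify.
Import Order.TTheory GRing.Theory Num.Theory.
Local Open Scope ring_scope.
Section SO.
Variable R : realType.
Variables (n q p : nat) (A : 'M[R]_n) (B : 'M[R]_(n,q)) (C : 'M[R]_(p,n)) (D : 'M[R]_(p,q)).

Lemma traj_shift x0 u i : traj A B x0 u i.+1 = traj A B (A *m x0 + B *m u 0%N) (fun j => u j.+1) i.
Proof. by elim: i => [//|i IH] /=; rewrite -IH. Qed.

Lemma outp_shift x0 u i : outp A B C D x0 u i.+1 = outp A B C D (A *m x0 + B *m u 0%N) (fun j => u j.+1) i.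
Proof. by rewrite /outp traj_shift. Qed.

Lemma traj0 k : traj A B 0 (fun _ => 0) k = 0.
Proof. by elim: k => [//|k IH] /=; rewrite IH !mulmx0 addr0. Qed.

Lemma outp0 k : outp A B C D 0 (fun _ => 0) k = 0.
Proof. by rewrite /outp traj0 !mulmx0 addr0. Qed.

Definition Fv (V : {vspace 'cV[R]_n}) : {vspace 'cV[R]_n} :=
  (linfun (mulmx (row_mx 1%:M (0 : 'M[R]_(n,q)))) @:
    (lker (linfun (mulmx (row_mx C D))) :&: linfun (mulmx (row_mx A B)) @^-1: V))%VS.

Lemma FvP (V : {vspace 'cV[R]_n}) (z : 'cV[R]_n) : reflect (exists v0, C *m z + D *m v0 = 0 /\ A *m z + B *m v0 \in V) (z \in Fv V).
Proof.
apply: (iffP memv_imgP).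
  move=> [u]; rewrite memv_cap memv_ker -memv_preim !lfunE /= => /andP[H1 H2] ->.
  move: H1 H2; rewrite -[u]vsubmxK !mul_row_col mul1mx mul0mx addr0 => /eqP H1 H2.
  by exists (dsubmx u).
move=> [v0 [H1 H2]]; exists (col_mx z v0).
  by rewrite memv_cap memv_ker -memv_preim !lfunE /= !mul_row_col H1 eqxx.
by rewrite lfunE /= mul_row_col mul1mx mul0mx addr0.
Qed.

Definition Vk k := iter k Fv fullv.

Lemma VkP k z : z \in Vk k <-> exists v, forall i, (i < k)%N -> outp A B C D z v i = 0.
Proof.
elim: k z => [|k IH] z.
  by split=> [_|_]; [exists (fun _ => 0) | exact: memvf].
split.
  move=> /FvP [v0 [H1 /IH [v' Hv']]].
  exists (fun j => if j is j'.+1 then v' j' else v0) => -[_|i Hi].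
    by rewrite /outp /=.
  by rewrite outp_shift; apply: Hv'.
move=> [v Hv]; apply/FvP; exists (v 0%N); split.
  by have := Hv 0%N erefl; rewrite /outp.
apply/IH; exists (fun j => v j.+1) => i Hi.
by rewrite -outp_shift; apply: Hv.
Qed.

Lemma Vk_dec k : (Vk k.+1 <= Vk k)%VS.
Proof.
apply/subvP => z /VkP [v Hv]; apply/VkP; exists v => i Hi; apply: Hv.
exact: ltnW.
Qed.

Lemma Vk_decS k j : (Vk (k + j) <= Vk k)%VS.
Proof.
elim: j => [|j IH]; first by rewrite addn0 subvv.
by rewrite addnS; apply: subv_trans (Vk_dec _) IH.
Qed.

Lemma Vk_stab k j : Vk k = Vk k.+1 -> Vk (k + j) = Vk k.
Proof.
move=> E; elim: j => [|j IH]; first by rewrite addn0.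
rewrite addnS; change (Fv (Vk (k + j)) = Vk k); rewrite IH.
by rewrite [RHS]E.
Qed.

Lemma dim_chain K : (forall k, (k < K)%N -> Vk k != Vk k.+1) -> (\dim (Vk K) + K <= \dim (Vk 0))%N.
Proof.
elim: K => [|K IH] H; first by rewrite addn0.
have H1 := IH (fun k Hk => H k (ltnW Hk)).
have H2 := H K (ltnSn K).
have H3 : (\dim (Vk K.+1) < \dim (Vk K))%N.
  rewrite ltnNge; apply/negP => Hd; move: H2; rewrite eq_sym eqEdim Vk_dec Hd.
  by [].
rewrite addnS; apply: leq_trans H1; rewrite -addSn leq_add2r //.
Qed.

Lemma dimV0 : (\dim (Vk 0) <= n)%N.
Proof. rewrite /Vk /= dimvf; have := @dim_matrix R n 1; by move=> ->; rewrite mulr1. Qed.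

Lemma exists_stab : exists k, (k <= n)%N /\ Vk k = Vk k.+1.
Proof.
case: (boolP [exists k : 'I_(n.+1), Vk k == Vk k.+1]).
  by move=> /existsP [k /eqP E]; exists k; split; [rewrite -ltnS ltn_ord|].
move=> /existsP Hn.
have : (\dim (Vk n.+1) + n.+1 <= \dim (Vk 0))%N.
  apply: dim_chain => k Hk; apply/negP => E; apply: Hn.
  by exists (Ordinal Hk).
move=> H; have := leq_trans H dimV0; rewrite addnS ltnNge leq_addl.
by [].
Qed.

Lemma Vn_sub N : (Vk n <= Vk N)%VS.
Proof.
case: (leqP N n) => HN.
  by have := Vk_decS N (n - N); rewrite subnKC.
have [k [Hk E]] := exists_stab.
have E1 := Vk_stab k (n - k) E; have E2 := Vk_stab k (N - k) E.
rewrite subnKC // in E1; rewrite subnKC in E2; last exact: leq_trans Hk (ltnW HN).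
by rewrite E1 E2 subvv.
Qed.

Lemma so_n : strongly_observable A B C D ->
  forall z v, (forall i, (i < n)%N -> outp A B C D z v i = 0) -> z = 0.
Proof.
move=> Hso z v Hz; have [tau Htau] := Hso 0 (fun _ => 0).
have : z \in Vk tau.+1 by apply: (subvP (Vn_sub _)); apply/VkP; exists v.
case/VkP => v' Hv'; apply: (Htau z v') => k Hk.
by rewrite Hv' // outp0.
Qed.
End SO.

Section M.
Variable R : realType.

Definition Sel {p : nat} (Th : {set 'I_p}) : 'M[R]_(#|Th|, p) :=
  \matrix_(i, j) ((enum_val i == j)%:R).

Lemma rows_ofE {p k : nat} (Th : {set 'I_p}) (M : 'M[R]_(p, k)) : rows_of Th M = Sel Th *m M.
Proof.
apply/matrixP => i j; rewrite !mxE (bigD1 (enum_val i)) //= mxE eqxx mul1r big1 ?addr0 //.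
by move=> l /negbTE Hl; rewrite mxE eq_sym Hl mul0r.
Qed.

Lemma cols_ofE {k m : nat} (G : {set 'I_m}) (M : 'M[R]_(k, m)) : cols_of G M = M *m (Sel G)^T.
Proof.
apply/matrixP => i j; rewrite !mxE (bigD1 (enum_val j)) //= !mxE eqxx mulr1 big1 ?addr0 //.
by move=> l /negbTE Hl; rewrite !mxE eq_sym Hl mulr0.
Qed.

Lemma Sel_entry {p k : nat} (Th : {set 'I_p}) (M : 'M[R]_(p, k)) i (Hi : i \in Th) j :
  (Sel Th *m M) (enum_rank_in Hi i) j = M i j.
Proof. by rewrite -rows_ofE mxE enum_rankK_in. Qed.

Lemma SelT_supp {m : nat} (G : {set 'I_m}) (U : 'cV[R]_#|G|) i : i \notin G -> ((Sel G)^T *m U) i 0 = 0.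
Proof.
move=> Hi; rewrite mxE big1 // => j _; rewrite !mxE.
have : enum_val j != i by apply: contraNneq Hi => <-; exact: enum_valP.
by move=> /negbTE ->; rewrite mul0r.
Qed.

Lemma SelTS {m : nat} (G : {set 'I_m}) (u : 'cV[R]_m) :
  (forall i, i \notin G -> u i 0 = 0) -> (Sel G)^T *m (Sel G *m u) = u.
Proof.
move=> Hu; apply/matrixP => i j; rewrite (ord1 j) mxE.
case: (boolP (i \in G)) => Hi.
  rewrite (bigD1 (enum_rank_in Hi i)) //= big1 ?addr0.
    by rewrite Sel_entry [_^T _ _]mxE mxE enum_rankK_in // eqxx mul1r.
  move=> l Hl; rewrite !mxE; case: eqP => [E|]; last by rewrite mul0r.
  by exfalso; move/eqP: Hl; apply; rewrite -[l](enum_valK_in Hi) E.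
rewrite Hu // big1 // => l _; rewrite !mxE; case: eqP => [E|]; last by rewrite mul0r.
by move: Hi; rewrite -E enum_valP.
Qed.

Lemma rows_of0 {p : nat} (Th : {set 'I_p}) (M : 'cV[R]_p) :
  (forall i, i \in Th -> M i 0 = 0) -> rows_of Th M = 0.
Proof. move=> H; apply/matrixP => i j; rewrite !mxE (ord1 j); apply: H; exact: enum_valP. Qed.

Variables (n m p : nat) (A : 'M[R]_n) (B : 'M[R]_(n,m)) (C : 'M[R]_(p,n)) (D : 'M[R]_(p,m)).

Lemma traj_sub (G : {set 'I_m}) z (V : nat -> 'cV[R]_m) k :
  (forall j i, i \notin G -> V j i 0 = 0) ->
  traj A (cols_of G B) z (fun j => rows_of G (V j)) k = traj A B z V k.
Proof.
move=> HV; elim: k => [//|k IH] /=.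
by rewrite IH cols_ofE rows_ofE -mulmxA SelTS // => i; apply: HV.
Qed.

Lemma outp_sub (G : {set 'I_m}) (Th : {set 'I_p}) z (V : nat -> 'cV[R]_m) k :
  (forall j i, i \notin G -> V j i 0 = 0) ->
  outp A (cols_of G B) (rows_of Th C) (cols_of G (rows_of Th D)) z (fun j => rows_of G (V j)) k
  = rows_of Th (outp A B C D z V k).
Proof.
move=> HV; rewrite /outp traj_sub // !cols_ofE !rows_ofE -!mulmxA SelTS; last by move=> i; apply: HV.
by rewrite mulmxDr !mulmxA.
Qed.

Lemma traj_lin x0 x0' u u' k :
  traj A B (x0 - x0') (fun j => u j - u' j) k = traj A B x0 u k - traj A B x0' u' k.
Proof.
elim: k => [//|k IH] /=; rewrite IH !mulmxBr opprD addrACA //.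
Qed.

Lemma outp_lin x0 x0' u u' k :
  outp A B C D (x0 - x0') (fun j => u j - u' j) k = outp A B C D x0 u k - outp A B C D x0' u' k.
Proof. by rewrite /outp traj_lin !mulmxBr opprD addrACA. Qed.

Lemma traj_closed x0 u k :
  traj A B x0 u k = A ^+ k *m x0 + \sum_(0 <= j < k) A ^+ (k - j - 1) *m B *m u j.
Proof.
elim: k => [|k IH] /=; first by rewrite expr0 mul1mx big_geq // addr0.
have eS j : A ^+ j.+1 = A *m A ^+ j by rewrite exprS.
rewrite IH big_nat_recr //= mulmxDr mulmxA -eS mulmx_sumr -addrA.
congr (_ + _); congr (_ + _); last by rewrite subSnn subnn expr0 mul1mx.
apply: eq_big_nat => j /andP[_ Hj].
rewrite !mulmxA -eS; congr (_ ^+ _ *m _ *m _); lia.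
Qed.
End M.

Theorem proposition1 (R : realType) (n m p r s : nat)
    (A : 'M[R]_n) (B : 'M[R]_(n, m)) (C : 'M[R]_(p, n)) (D : 'M[R]_(p, m))
    (x : nat -> 'cV[R]_n) (w : nat -> 'cV[R]_m) (a : nat -> 'cV[R]_p)
    (y : nat -> 'cV[R]_p)
    (Hdyn : forall k, x k.+1 = A *m x k + B *m w k)
    (Hout : forall k, y k = C *m x k + D *m w k + a k)
    (Gu_star : {set 'I_m}) (Lam_star : {set 'I_p})
    (HGu_star : (#|Gu_star| <= r)%N) (HLam_star : (#|Lam_star| <= s)%N)
    (Hw_supp : forall k (i : 'I_m), i \notin Gu_star -> w k i 0 = 0)
    (Ha_supp : forall k (i : 'I_p), i \notin Lam_star -> a k i 0 = 0)
    (Hsso : sparse_strongly_observable A B C D (2 * r) (2 * s))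
    (t : nat) (Ht : (n - 1 <= t)%N)
    (Gu : {set 'I_m}) (Gy : {set 'I_p})
    (HGu : (#|Gu| <= r)%N) (HGy : (p - s <= #|Gy|)%N)
    (Uhat : 'I_n -> 'cV[R]_#|Gu|) (xhat : 'cV[R]_n)
    (Hfit : forall k : 'I_n,
        Yblock n y Gy t k =
          obs_block A C Gy k *m xhat
          + \sum_(j < n) toep_block A B C D Gu Gy k j *m Uhat j) :
  xhat = x (t + 1 - n)%N.
Proof.
set t0 := (t + 1 - n)%N.
set Th := Gy :\: Lam_star.
set Ga := Gu :|: Gu_star.
have HGa : (#|Ga| <= 2 * r)%N by rewrite cardsU; lia.
have HTh : (p - 2 * s <= #|Th|)%N.
  rewrite cardsD.
  have : (#|Gy :&: Lam_star| <= #|Lam_star|)%N by apply: subset_leq_card; apply: subsetIr.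
  lia.
have Hso := Hsso Ga Th HGa HTh.
have Xk : forall k, x (t0 + k)%N = traj A B (x t0) (fun j => w (t0 + j)%N) k.
  elim=> [|k IH]; first by rewrite addn0.
  by rewrite addnS Hdyn IH /=.
pose Uhn j : 'cV[R]_#|Gu| := oapp Uhat 0 (insub j).
pose Uh j : 'cV[R]_m := (Sel R Gu)^T *m Uhn j.
have Fit : forall k, (k < n)%N -> forall i, i \in Gy ->
    y (t0 + k)%N i 0 = outp A B C D xhat Uh k i 0.
  move=> k Hk i Hi.
  have claim : obs_block A C Gy k *m xhat
          + \sum_(j < n) toep_block A B C D Gu Gy k j *m Uhat j
       = Sel R Gy *m outp A B C D xhat Uh k.
    have -> : \sum_(j < n) toep_block A B C D Gu Gy k j *m Uhat j
            = \sum_(0 <= j < n) toep_block A B C D Gu Gy k j *m Uhn j.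
      by rewrite big_mkord; apply: eq_bigr => j _; rewrite /Uhn valK.
    rewrite (big_cat_nat (leq0n k.+1) Hk) /= big_nat_recr //=.
    have E2 : \sum_(k.+1 <= j < n) toep_block A B C D Gu Gy k j *m Uhn j = 0.
      rewrite big_nat_cond big1 // => j /andP[/andP[Hj _] _].
      have H1 : (k == j) = false by rewrite ltn_eqF.
      have H2 : (j < k)%N = false by rewrite ltnNge ltnW.
      by rewrite /toep_block H1 H2 mul0mx.
    have E1 : \sum_(0 <= j < k) toep_block A B C D Gu Gy k j *m Uhn j
        = \sum_(0 <= j < k) Sel R Gy *m C *m A ^+ (k - j - 1) *m B *m Uh j.
      apply: eq_big_nat => j /andP[_ Hj].
      by rewrite /toep_block (gtn_eqF Hj) Hj rows_ofE cols_ofE /Uh ?mulmxA.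
    rewrite E1 E2 addr0 /toep_block eqxx /obs_block /outp traj_closed.
    rewrite !mulmxDr !mulmx_sumr !addrA !mulmxA.
    congr (_ + _ + _); last by rewrite /Uh rows_ofE cols_ofE ?mulmxA.
      by rewrite rows_ofE.
    by apply: eq_big_nat => j _; rewrite !mulmxA.
  have := Hfit (Ordinal Hk); rewrite claim /Yblock /= -/t0 => E.
  by rewrite -[RHS](@Sel_entry R _ _ Gy _ i Hi) -E mxE enum_rankK_in.
have Zk : forall k, (k < n)%N -> forall i, i \in Th ->
    outp A B C D (xhat - x t0) (fun j => Uh j - w (t0 + j)%N) k i 0 = 0.
  move=> k Hk i; rewrite inE => /andP[HiL HiG].
  have Ya : y (t0 + k)%N i 0 = (C *m x (t0 + k)%N + D *m w (t0 + k)%N) i 0.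
    by rewrite Hout mxE (Ha_supp _ _ HiL) addr0.
  have Hsub : forall M N : 'cV[R]_p, (M - N) i 0 = M i 0 - N i 0 by move=> M N; rewrite !mxE.
  rewrite outp_lin Hsub -(Fit k Hk i HiG) Ya /outp /= -Xk.
  by rewrite subrr.
have HV : forall j i, i \notin Ga -> (Uh j - w (t0 + j)%N) i 0 = 0.
  move=> j i; rewrite inE negb_or => /andP[H1 H2].
  rewrite mxE [X in _ + X]mxE (Hw_supp _ _ H2) subr0 /Uh.
  exact: SelT_supp.
apply/eqP; rewrite -subr_eq0; apply/eqP.
apply: (@so_n R n #|Ga| #|Th| A _ _ _ Hso _ (fun j => rows_of Ga (Uh j - w (t0 + j)%N))) => k Hk.
rewrite outp_sub //; apply: rows_of0 => i Hi; exact: Zk.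
Qed.
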